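(* Let $\mathbb K=\mathbb R$ and let $X=\varprojlim X_np_n$, $q_1\colon X_1\to\mathbb R$ (increasing, superlinear), $q=q_1\circ\operatorname{pr}_1$, the vector subspace $X_0\subset X$, the convex cone $H\subset X$ and $H_n=\operatorname{pr}_nH$ satisfy conditions (i), (ii), (v) below, together with condition (iii–iv): (i) for each $n$, $H_n$ contains a vector $\le_n0$; (ii) for each $n$, $H_n$ is minorizing for $\operatorname{pr}_nX_0$; (v) for every decreasing sequence $(h^{(k)})\subset H$ with $\inf_kq(h^{(k)})\in\mathbb R$, the sequence is bounded below in $X$ and $q(\inf_kh^{(k)})\ge\inf_kq(h^{(k)})$; (iii–iv) for every sequence $(h^{(k)})\subset H$ bounded (above and below) in $X$, $\limsup_kh^{(k)}:=\inf_n\sup_{k\ge n}h^{(k)}$ exists in $X$ and belongs to $H$. Then $\mathrm{spf}_{H,q}$ takes values in $\mathbb R\cup\{-\infty\}$, is superadditive and positively homogeneous, and for all $x\in X_0$ $$\mathrm{spf}_{H,q}(x)=\inf\{l(x):\ l\in L,\ q(h)\le l(x')\ \text{for all }h\in H,\ x'\in X_0,\ h\le x'\}$$ with $L$ the space of all linear functions $X_0\to\mathbb R$. If $H$ contains a vector $h\le0$ of $X$, then $\mathrm{spf}_{H,q}$ is superlinear and positive and $L$ may be replaced by the set of positive linear functions on $X_0$ (those with $l(x)\ge0$ for $x\in X_0$, $x\ge0$).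
   Context: All vector spaces are real. Projective limit: for ordered vector spaces $(X_n,\le_n)$ and positive linear $p_n\colon X_{n+1}\to X_n$, $X=\varprojlim X_np_n=\{x=(x_n)\in\prod X_n:\ x_n=p_n(x_{n+1})\ \forall n\}$ with coordinatewise order, $\operatorname{pr}_nx=x_n$; the limit is assumed reduced ($\operatorname{pr}_nX=X_n$) and regular (all $X_n$ vector lattices, each $p_n$ preserving suprema of finite sets). A set $G\subset X_n$ is minorizing for $Y\subset X_n$ if for each $y\in Y$ there is $g\in G$ with $g\le_ny$. Supremal function: $\mathrm{spf}_{H,q}(x)=\sup\{q(h):\ h\in H,\ h\le x\}$, $\sup\varnothing=-\infty$. Superlinear: superadditive, $g(tx)=tg(x)$ for $t>0$, $g(0)$ finite. *)

(* Defs.v *)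
From Stdlib Require Import Reals ClassicalEpsilon.
Open Scope R_scope.

Record VL := {
  car :> Type;
  vzero : car;
  vadd : car -> car -> car;
  vopp : car -> car;
  vscal : R -> car -> car;
  vle : car -> car -> Prop;
  vjoin : car -> car -> car;
  vaddA : forall a b c, vadd a (vadd b c) = vadd (vadd a b) c;
  vaddC : forall a b, vadd a b = vadd b a;
  vadd0 : forall a, vadd vzero a = a;
  vaddN : forall a, vadd (vopp a) a = vzero;
  vscalA : forall s t a, vscal s (vscal t a) = vscal (s * t) a;
  vscal1 : forall a, vscal 1 a = a;
  vscalDr : forall t a b, vscal t (vadd a b) = vadd (vscal t a) (vscal t b);
  vscalDl : forall s t a, vscal (s + t) a = vadd (vscal s a) (vscal t a);
  vle_refl : forall a, vle a a;
  vle_antisym : forall a b, vle a b -> vle b a -> a = b;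
  vle_trans : forall a b c, vle a b -> vle b c -> vle a c;
  vle_add : forall a b c, vle a b -> vle (vadd a c) (vadd b c);
  vle_scal : forall t a b, 0 <= t -> vle a b -> vle (vscal t a) (vscal t b);
  vjoin_l : forall a b, vle a (vjoin a b);
  vjoin_r : forall a b, vle b (vjoin a b);
  vjoin_lub : forall a b c, vle a c -> vle b c -> vle (vjoin a b) c
}.

Arguments vzero {_}. Arguments vadd {_}. Arguments vopp {_}.
Arguments vscal {_}. Arguments vle {_}. Arguments vjoin {_}.

(** Connecting maps p_n : X_{n+1} -> X_n : linear, positive, preserving
    (binary, hence finite nonempty) suprema. Indices start at 0. *)
Definition regular_system (Xs : nat -> VL) (p : forall n, Xs (S n) -> Xs n) : Prop :=
  forall n,
    (forall a b : Xs (S n), p n (vadd a b) = vadd (p n a) (p n b)) /\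
    (forall (t : R) (a : Xs (S n)), p n (vscal t a) = vscal t (p n a)) /\
    (forall a : Xs (S n), vle vzero a -> vle vzero (p n a)) /\
    (forall a b : Xs (S n), p n (vjoin a b) = vjoin (p n a) (p n b)).

Definition Prod (Xs : nat -> VL) := forall n, Xs n.

Section Lim.
Variable Xs : nat -> VL.
Variable p : forall n, Xs (S n) -> Xs n.

Definition inLim (x : Prod Xs) : Prop := forall n, x n = p n (x (S n)).

Definition reduced : Prop :=
  forall n (y : Xs n), exists x, inLim x /\ x n = y.

Definition pzero : Prod Xs := fun n => vzero.
Definition padd (x y : Prod Xs) : Prod Xs := fun n => vadd (x n) (y n).
Definition pscal (t : R) (x : Prod Xs) : Prod Xs := fun n => vscal t (x n).
Definition ple (x y : Prod Xs) : Prop := forall n, vle (x n) (y n).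

Definition is_infX (S : Prod Xs -> Prop) (g : Prod Xs) : Prop :=
  inLim g /\ (forall s, S s -> ple g s) /\
  (forall b, inLim b -> (forall s, S s -> ple b s) -> ple b g).
Definition is_supX (S : Prod Xs -> Prop) (g : Prod Xs) : Prop :=
  inLim g /\ (forall s, S s -> ple s g) /\
  (forall b, inLim b -> (forall s, S s -> ple s b) -> ple g b).

Definition subspace (X0 : Prod Xs -> Prop) : Prop :=
  (forall x, X0 x -> inLim x) /\ X0 pzero /\
  (forall x y, X0 x -> X0 y -> X0 (padd x y)) /\
  (forall t x, X0 x -> X0 (pscal t x)).

Definition convex_cone (H : Prod Xs -> Prop) : Prop :=
  (forall h, H h -> inLim h) /\
  (forall h k, H h -> H k -> H (padd h k)) /\
  (forall t h, 0 < t -> H h -> H (pscal t h)).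

Definition linear_on (X0 : Prod Xs -> Prop) (l : Prod Xs -> R) : Prop :=
  (forall x y, X0 x -> X0 y -> l (padd x y) = l x + l y) /\
  (forall t x, X0 x -> l (pscal t x) = t * l x).

Definition positive_on (X0 : Prod Xs -> Prop) (l : Prod Xs -> R) : Prop :=
  forall x, X0 x -> ple pzero x -> 0 <= l x.
End Lim.

Arguments inLim {Xs}. Arguments pzero {Xs}. Arguments padd {Xs}.
Arguments pscal {Xs}. Arguments ple {Xs}. Arguments is_infX {Xs}.
Arguments is_supX {Xs}.

Inductive ER := Fin (r : R) | MInf | PInf.

Definition ERle (a b : ER) : Prop :=
  match a, b with
  | MInf, _ => True
  | _, PInf => True
  | Fin x, Fin y => x <= y
  | _, _ => False
  end.

(** -oo absorbing (the case +oo + -oo never arises below) *)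
Definition ERplus (a b : ER) : ER :=
  match a, b with
  | Fin x, Fin y => Fin (x + y)
  | MInf, _ | _, MInf => MInf
  | _, _ => PInf
  end.

Definition ERscal (t : R) (a : ER) : ER :=
  match a with Fin x => Fin (t * x) | e => e end.

Definition ERopp (a : ER) : ER :=
  match a with Fin x => Fin (- x) | MInf => PInf | PInf => MInf end.

(** sup of a set of reals in the extended reals; sup of empty set = -oo *)
Definition ERsup (E : R -> Prop) : ER :=
  match excluded_middle_informative (exists r, E r) with
  | left ne =>
      match excluded_middle_informative (bound E) with
      | left b => Fin (proj1_sig (completeness E b ne))
      | right _ => PInf
      end
  | right _ => MInf
  end.

(** inf of a set of reals; inf of empty set = +oo *)
Definition ERinf (E : R -> Prop) : ER := ERopp (ERsup (fun r => E (- r))).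

Definition is_glb (E : R -> Prop) (m : R) : Prop :=
  (forall x, E x -> m <= x) /\ (forall b, (forall x, E x -> b <= x) -> b <= m).

Definition spf {Xs : nat -> VL} (H : Prod Xs -> Prop) (q : Prod Xs -> R)
  (x : Prod Xs) : ER :=
  ERsup (fun r => exists h, H h /\ ple h x /\ r = q h).

(* Main.v *)
Require Import Defs.
From Stdlib Require Import Reals ClassicalEpsilon.
From Stdlib Require Import Lra Lia Classical FunctionalExtensionality Arith.
From mathcomp Require classical_sets.
Open Scope R_scope.

Lemma ZornP (T : Type) (t0 : T) (Rl : T -> T -> Prop) :
  (forall t, Rl t t) -> (forall r s t, Rl r s -> Rl s t -> Rl r t) ->
  (forall A : T -> Prop, (forall s t, A s -> A t -> Rl s t \/ Rl t s) ->
     exists t, forall s, A s -> Rl s t) ->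
  exists t, forall s, Rl t s -> Rl s t.
Proof.
intros Hr Ht Hc.
set (Rb := fun a b => if excluded_middle_informative (Rl a b) then true else false).
assert (E : forall a b, Rb a b = true <-> Rl a b).
{ intros a b; unfold Rb; destruct (excluded_middle_informative (Rl a b)); split; intros; auto; discriminate. }
destruct (@classical_sets.ZL_preorder T t0 Rb) as [t Ht0].
- intros x; apply E; auto.
- intros r s u H1 H2; apply E; apply E in H1; apply E in H2; eauto.
- intros A HA. destruct (Hc A) as [t Ht1].
  + intros s u Hs Hu; destruct (HA s u Hs Hu) as [H|H]; [left|right]; apply E; exact H.
  + exists t; intros s Hs; apply E; auto.
- exists t; intros s Hs. apply E. apply Ht0. apply E. exact Hs.
Qed.

Definition Rinf (E : R -> Prop) : R :=
  match excluded_middle_informative (exists x, E (- x)) with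
  | left ne =>
      match excluded_middle_informative (bound (fun y => E (- y))) with
      | left b => - proj1_sig (completeness _ b ne)
      | right _ => 0
      end
  | right _ => 0
  end.

Lemma Rinf_spec (E : R -> Prop) :
  (exists x, E x) -> (exists m, forall x, E x -> m <= x) ->
  (forall x, E x -> Rinf E <= x) /\
  (forall m, (forall x, E x -> m <= x) -> m <= Rinf E).
Proof.
intros [x0 Hx0] [m Hm]. unfold Rinf.
destruct (excluded_middle_informative (exists x, E (- x))) as [ne|ne].
2:{ exfalso; apply ne; exists (- x0); rewrite Ropp_involutive; auto. }
destruct (excluded_middle_informative (bound (fun y => E (- y)))) as [b|b].
2:{ exfalso; apply b; exists (- m); intros y Hy; apply Hm in Hy; lra. }
destruct (completeness _ b ne) as [s [Hs1 Hs2]]; simpl.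
split.
- intros x Hx. assert (- x <= s) by (apply Hs1; rewrite Ropp_involutive; auto). lra.
- intros m' Hm'. assert (s <= - m'). { apply Hs2. intros y Hy. apply Hm' in Hy; lra. } lra.
Qed.

Lemma Rinf_le (E : R -> Prop) x :
  E x -> (exists m, forall x, E x -> m <= x) -> Rinf E <= x.
Proof. intros Hx Hb. apply (proj1 (Rinf_spec E (ex_intro _ x Hx) Hb)); auto. Qed.

Lemma Rinf_ge (E : R -> Prop) m :
  (exists x, E x) -> (forall x, E x -> m <= x) -> m <= Rinf E.
Proof. intros Hn Hm. apply (proj2 (Rinf_spec E Hn (ex_intro _ m Hm))); auto. Qed.

Lemma Rinf_add (E1 E2 : R -> Prop) L :
  (exists x, E1 x) -> (exists m, forall x, E1 x -> m <= x) ->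
  (exists x, E2 x) -> (exists m, forall x, E2 x -> m <= x) ->
  (forall a b, E1 a -> E2 b -> L <= a + b) -> L <= Rinf E1 + Rinf E2.
Proof.
intros n1 b1 n2 b2 H.
assert (forall b, E2 b -> L - b <= Rinf E1).
{ intros b Hb. apply Rinf_ge; auto. intros a Ha. specialize (H a b Ha Hb). lra. }
assert (L - Rinf E1 <= Rinf E2).
{ apply Rinf_ge; auto. intros b Hb. specialize (H0 b Hb). lra. }
lra.
Qed.

Lemma Rinf_scale (E F : R -> Prop) s :
  0 < s -> (exists x, E x) -> (exists m, forall x, E x -> m <= x) ->
  (forall a, E a -> F (s * a)) -> (forall b, F b -> E (b / s)) ->
  Rinf F = s * Rinf E.
Proof.
intros Hs nE bE HEF HFE.
assert (nF : exists x, F x) by (destruct nE as [x Hx]; exists (s * x); auto).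
assert (bF : exists m, forall x, F x -> m <= x).
{ destruct bE as [m Hm]. exists (s * m). intros x Hx. apply HFE, Hm in Hx.
  apply Rmult_le_compat_l with (r := s) in Hx; [|lra].
  replace (s * (x / s)) with x in Hx by (field; lra). exact Hx. }
apply Rle_antisym.
- assert (Rinf F / s <= Rinf E).
  { apply Rinf_ge; auto. intros a Ha. apply HEF in Ha.
    apply Rinf_le in Ha; auto.
    apply Rmult_le_compat_r with (r := / s) in Ha; [|apply Rlt_le, Rinv_0_lt_compat; lra].
    unfold Rdiv. replace (s * a * / s) with a in Ha by (field; lra). exact Ha. }
  apply Rmult_le_compat_l with (r := s) in H; [|lra].
  replace (s * (Rinf F / s)) with (Rinf F) in H by (field; lra). exact H.
- apply Rinf_ge; auto. intros b Hb. apply HFE in Hb.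
  apply Rinf_le in Hb; auto.
  apply Rmult_le_compat_l with (r := s) in Hb; [|lra].
  replace (s * (b / s)) with b in Hb by (field; lra). exact Hb.
Qed.

Lemma ERsup_empty (E : R -> Prop) : ~ (exists r, E r) -> ERsup E = MInf.
Proof.
intros H. unfold ERsup. destruct (excluded_middle_informative (exists r, E r)); tauto.
Qed.

Lemma ERsup_fin (E : R -> Prop) M :
  (exists r, E r) -> (forall r, E r -> r <= M) ->
  exists s, ERsup E = Fin s /\ is_lub E s.
Proof.
intros ne HM. unfold ERsup.
destruct (excluded_middle_informative (exists r, E r)) as [n|n]; [|tauto].
destruct (excluded_middle_informative (bound E)) as [b|b].
2:{ exfalso; apply b; exists M; intros x Hx; auto. }
destruct (completeness E b n) as [s Hs]; simpl. exists s; auto.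
Qed.

Lemma ERsup_inf (E : R -> Prop) :
  (exists r, E r) -> (forall M, exists r, E r /\ M < r) -> ERsup E = PInf.
Proof.
intros ne HM. unfold ERsup.
destruct (excluded_middle_informative (exists r, E r)) as [n|n]; [|tauto].
destruct (excluded_middle_informative (bound E)) as [b|b]; auto.
exfalso. destruct b as [M HM']. destruct (HM M) as [r [Hr1 Hr2]].
apply HM' in Hr1. lra.
Qed.

Lemma dual_generic (E S : R -> Prop) M :
  (forall e, E e -> e <= M) ->
  (forall s e, S s -> E e -> e <= s) ->
  (forall r, ~ (exists e, E e /\ r <= e) -> exists s, S s /\ s <= r) ->
  ERsup E = ERopp (ERsup (fun r => S (- r))).
Proof.
intros HM Ha Hb.
destruct (classic (exists e, E e)) as [ne|ne].
- destruct (ERsup_fin E M ne HM) as [s [Es [Hs1 Hs2]]]. rewrite Es.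
  assert (nT : exists u, S (- u)).
  { destruct (Hb (s + 1)) as [σ [Hσ1 Hσ2]].
    - intros [e [He1 He2]]. apply Hs1 in He1. lra.
    - exists (- σ). rewrite Ropp_involutive. auto. }
  assert (bT : forall u, S (- u) -> u <= - s).
  { intros u Hu. assert (s <= - u). { apply Hs2. intros e He. eapply Ha; eauto. } lra. }
  destruct (ERsup_fin (fun r => S (- r)) (- s) nT bT) as [t [Et [Ht1 Ht2]]].
  rewrite Et. simpl. f_equal.
  assert (t <= - s).
  { apply Ht2. intros u Hu. assert (s <= - u). { apply Hs2. intros e He. eapply Ha; eauto. } lra. }
  assert (- s <= t).
  { destruct (Rle_dec (- s) t) as [|Hlt]; auto. exfalso.
    destruct (Hb (s + (- s - t) / 2)) as [σ [Hσ1 Hσ2]].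
    - intros [e [He1 He2]]. apply Hs1 in He1. lra.
    - assert (- σ <= t). { apply Ht1. rewrite Ropp_involutive; auto. } lra. }
  lra.
- rewrite (ERsup_empty E ne). rewrite ERsup_inf; auto.
  + destruct (Hb 0) as [σ [Hσ _]]. { intros [e [He _]]. apply ne; eauto. }
    exists (- σ); rewrite Ropp_involutive; auto.
  + intros M'. destruct (Hb (- M' - 1)) as [σ [Hσ1 Hσ2]].
    { intros [e [He _]]. apply ne; eauto. }
    exists (- σ). rewrite Ropp_involutive. split; auto. lra.
Qed.

Lemma vadd0r (V : VL) (a : V) : vadd a vzero = a.
Proof. rewrite vaddC. apply vadd0. Qed.

Lemma vcancel (V : VL) (a : V) : vadd a a = a -> a = vzero.
Proof.
intros H. assert (H0 : vadd (vopp a) (vadd a a) = vadd (vopp a) a) by (rewrite H; auto).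
rewrite vaddA, vaddN, vadd0 in H0. exact H0.
Qed.

Lemma vscal0 (V : VL) (a : V) : vscal 0 a = vzero.
Proof. apply vcancel. rewrite <- vscalDl. f_equal; ring. Qed.

Lemma vscal_z (V : VL) (t : R) : vscal t (@vzero V) = vzero.
Proof. apply vcancel. rewrite <- vscalDr, vadd0. reflexivity. Qed.

Lemma vaddNr (V : VL) (a : V) : vadd a (vscal (-1) a) = vzero.
Proof. rewrite <- (vscal1 V a) at 1. rewrite <- vscalDl. replace (1 + -1) with 0 by ring. apply vscal0. Qed.

Lemma vaddNl (V : VL) (a : V) : vadd (vscal (-1) a) a = vzero.
Proof. rewrite vaddC. apply vaddNr. Qed.

Lemma vadd_sw (V : VL) (a b c d : V) : vadd (vadd a b) (vadd c d) = vadd (vadd a c) (vadd b d).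
Proof.
rewrite <- !vaddA. f_equal. rewrite !vaddA. f_equal. apply vaddC.
Qed.

Lemma vle_neg (V : VL) (a b : V) : vle a b -> vle (vscal (-1) b) (vscal (-1) a).
Proof.
intros H. apply (vle_add V a b (vadd (vscal (-1) a) (vscal (-1) b))) in H.
rewrite vaddA, vaddNr, vadd0 in H.
rewrite (vaddC V (vscal (-1) a)), vaddA, vaddNr, vadd0 in H. exact H.
Qed.

Lemma vnegneg (V : VL) (a : V) : vscal (-1) (vscal (-1) a) = a.
Proof. rewrite vscalA. replace (-1 * -1) with 1 by ring. apply vscal1. Qed.

Lemma vjoin_eq (V : VL) (a b : V) : vle a b -> vjoin a b = b.
Proof. intros H. apply vle_antisym. apply vjoin_lub; auto. apply vle_refl. apply vjoin_r. Qed.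

Lemma p_mono Xs p (Hreg : regular_system Xs p) n (a b : Xs (S n)) :
  vle a b -> vle (p n a) (p n b).
Proof.
intros H. destruct (Hreg n) as [_ [_ [_ Hj]]].
rewrite <- (vjoin_eq _ a b H), Hj. apply vjoin_l.
Qed.

Lemma p_zero Xs p (Hreg : regular_system Xs p) n : p n vzero = vzero.
Proof.
destruct (Hreg n) as [_ [Hs _]].
rewrite <- (vscal0 _ (@vzero (Xs (S n)))), Hs. apply vscal0.
Qed.

Lemma lim_mono Xs p (Hreg : regular_system Xs p) (h x : Prod Xs) :
  inLim p h -> inLim p x -> forall n, vle (h n) (x n) -> forall m, (m <= n)%nat -> vle (h m) (x m).
Proof.
intros Hh Hx n Hn m Hm. induction Hm; auto.
apply IHHm. rewrite (Hh m0), (Hx m0). apply p_mono; auto.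
Qed.

Definition pjoin {Xs} (x y : Prod Xs) : Prod Xs := fun n => vjoin (x n) (y n).

Lemma lim_zero Xs p (Hreg : regular_system Xs p) : inLim p (@pzero Xs).
Proof. intros n. unfold pzero. rewrite p_zero; auto. Qed.

Lemma lim_add Xs p (Hreg : regular_system Xs p) x y :
  inLim p x -> inLim p y -> inLim p (padd x y).
Proof. intros Hx Hy n. unfold padd. destruct (Hreg n) as [Ha _]. rewrite Ha, <- Hx, <- Hy. auto. Qed.

Lemma lim_scal Xs p (Hreg : regular_system Xs p) t x :
  inLim p x -> inLim p (pscal t x).
Proof. intros Hx n. unfold pscal. destruct (Hreg n) as [_ [Hs _]]. rewrite Hs, <- Hx. auto. Qed.

Lemma lim_join Xs p (Hreg : regular_system Xs p) x y :
  inLim p x -> inLim p y -> inLim p (pjoin x y).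
Proof. intros Hx Hy n. unfold pjoin. destruct (Hreg n) as [_ [_ [_ Hj]]]. rewrite Hj, <- Hx, <- Hy. auto. Qed.

Lemma ple_refl Xs (x : Prod Xs) : ple x x.
Proof. intros n; apply vle_refl. Qed.
Lemma ple_trans Xs (x y z : Prod Xs) : ple x y -> ple y z -> ple x z.
Proof. intros H1 H2 n; eapply vle_trans; eauto. Qed.

Ltac pext := apply functional_extensionality_dep; intro; unfold padd, pscal, pzero.

Lemma P_scal0 Xs (y : Prod Xs) : pscal 0 y = pzero.
Proof. pext. apply vscal0. Qed.
Lemma P_scalz Xs t : pscal t (@pzero Xs) = pzero.
Proof. pext. apply vscal_z. Qed.
Lemma P_sw Xs (x1 y x2 : Prod Xs) t1 t2 :
  padd (padd x1 (pscal t1 y)) (padd x2 (pscal t2 y)) = padd (padd x1 x2) (pscal (t1 + t2) y).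
Proof. pext. rewrite vscalDl. apply vadd_sw. Qed.
Lemma P_scD Xs (x y : Prod Xs) s t :
  pscal s (padd x (pscal t y)) = padd (pscal s x) (pscal (s * t) y).
Proof. pext. rewrite vscalDr, vscalA. auto. Qed.
Lemma P_negpos Xs (y : Prod Xs) : padd (pscal (-1) y) (pscal 1 y) = pzero.
Proof. pext. rewrite vscal1. apply vaddNl. Qed.
Lemma P_shiftlb Xs (x y : Prod Xs) t : padd (padd x (pscal t y)) (pscal (-1) x) = pscal t y.
Proof. pext. rewrite vaddC, vaddA, vaddNl, vadd0. auto. Qed.
Lemma P_addN Xs (x : Prod Xs) : padd x (pscal (-1) x) = pzero.
Proof. pext. apply vaddNr. Qed.
Lemma P_addK Xs (x y : Prod Xs) : padd (padd x y) (pscal (-1) y) = x.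
Proof. pext. rewrite <- vaddA, vaddNr, vadd0r. auto. Qed.
Lemma P_negsc Xs (x : Prod Xs) t : pscal t x = pscal (- t) (pscal (-1) x).
Proof. pext. rewrite vscalA. f_equal. ring. Qed.
Lemma P_scK Xs (x : Prod Xs) t : t <> 0 -> pscal (/ t) (pscal t x) = x.
Proof. intros Ht. pext. rewrite vscalA, Rinv_l, vscal1; auto. Qed.

Definition sublin {Xs} (V : Prod Xs -> Prop) (P : Prod Xs -> R) : Prop :=
  (forall x y, V x -> V y -> P (padd x y) <= P x + P y) /\
  (forall t x, 0 < t -> V x -> P (pscal t x) = t * P x).

Definition vsub {Xs} (V : Prod Xs -> Prop) : Prop :=
  V pzero /\ (forall x y, V x -> V y -> V (padd x y)) /\ (forall t x, V x -> V (pscal t x)).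

Lemma P_add0 Xs (x : Prod Xs) : padd x pzero = x.
Proof. apply functional_extensionality_dep; intro; unfold padd, pzero. apply vadd0r. Qed.

Lemma sublin_0 Xs (V : Prod Xs -> Prop) P : vsub V -> sublin V P -> P pzero = 0.
Proof.
intros [V0 _] [_ Hh]. pose proof (Hh 2 pzero ltac:(lra) V0) as H.
rewrite P_scalz in H. lra.
Qed.

Lemma sublin_t Xs (V : Prod Xs -> Prop) P : vsub V -> sublin V P ->
  forall t x, 0 <= t -> V x -> P (pscal t x) = t * P x.
Proof.
intros HV HP t x Ht Hx. destruct (Rle_lt_or_eq_dec 0 t Ht) as [H|H].
- apply (proj2 HP); auto.
- subst t. rewrite P_scal0, (sublin_0 _ V P HV HP). ring.
Qed.

Lemma sublin_neg Xs (V : Prod Xs -> Prop) P : vsub V -> sublin V P ->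
  forall x, V x -> - P (pscal (-1) x) <= P x.
Proof.
intros HV HP x Hx. destruct HV as [V0 [VA VS]].
pose proof (proj1 HP x (pscal (-1) x) Hx (VS _ _ Hx)) as H.
rewrite P_addN, (sublin_0 _ V P (conj V0 (conj VA VS)) HP) in H. lra.
Qed.

Definition shiftP {Xs} (P : Prod Xs -> R) (y x : Prod Xs) : R :=
  Rinf (fun u => exists t, 0 <= t /\ u = P (padd x (pscal t y)) - t * P y).

Lemma shift_ne {Xs} (P : Prod Xs -> R) y x :
  exists u, exists t, 0 <= t /\ u = P (padd x (pscal t y)) - t * P y.
Proof. eexists; exists 0; split; [lra|reflexivity]. Qed.

Lemma shift_bd Xs (V : Prod Xs -> Prop) P : vsub V -> sublin V P ->
  forall y x, V y -> V x ->
  exists m, forall u, (exists t, 0 <= t /\ u = P (padd x (pscal t y)) - t * P y) -> m <= u.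
Proof.
intros HV HP y x Hy Hx. pose proof HV as [V0 [VA VS]].
exists (- P (pscal (-1) x)). intros u [t [Ht ->]].
pose proof (proj1 HP (padd x (pscal t y)) (pscal (-1) x) (VA _ _ Hx (VS _ _ Hy)) (VS _ _ Hx)) as H.
rewrite P_shiftlb, (sublin_t _ V P HV HP t y Ht Hy) in H. lra.
Qed.

Lemma shift_le Xs (V : Prod Xs -> Prop) P : vsub V -> sublin V P ->
  forall y x t, V y -> V x -> 0 <= t ->
  shiftP P y x <= P (padd x (pscal t y)) - t * P y.
Proof.
intros HV HP y x t Hy Hx Ht. unfold shiftP. apply Rinf_le.
- exists t; auto.
- apply (shift_bd _ V P HV HP y x Hy Hx).
Qed.

Lemma shift_leP Xs (V : Prod Xs -> Prop) P : vsub V -> sublin V P ->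
  forall y x, V y -> V x -> shiftP P y x <= P x.
Proof.
intros HV HP y x Hy Hx. pose proof (shift_le _ V P HV HP y x 0 Hy Hx (Rle_refl _)) as H.
rewrite P_scal0, P_add0 in H. lra.
Qed.

Lemma shift_sublin Xs (V : Prod Xs -> Prop) P : vsub V -> sublin V P ->
  forall y, V y -> sublin V (shiftP P y).
Proof.
intros HV HP y Hy. pose proof HV as [V0 [VA VS]]. split.
- intros x1 x2 H1 H2. unfold shiftP at 2 3.
  apply Rinf_add; try apply shift_ne; try apply (shift_bd _ V P HV HP); auto.
  intros a b [t1 [Ht1 ->]] [t2 [Ht2 ->]].
  eapply Rle_trans. apply (shift_le _ V P HV HP y (padd x1 x2) (t1 + t2)); auto; lra.
  rewrite <- P_sw.
  pose proof (proj1 HP (padd x1 (pscal t1 y)) (padd x2 (pscal t2 y))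
     (VA _ _ H1 (VS _ _ Hy)) (VA _ _ H2 (VS _ _ Hy))). lra.
- intros s x Hs Hx. unfold shiftP.
  apply Rinf_scale; auto; try apply shift_ne; try apply (shift_bd _ V P HV HP); auto.
  + intros a [t [Ht ->]]. exists (s * t). split. apply Rmult_le_pos; lra.
    rewrite <- P_scD. rewrite (proj2 HP s); auto. ring.
  + intros b [t [Ht ->]]. exists (t / s). split. apply Rmult_le_pos; [lra|]. apply Rlt_le, Rinv_0_lt_compat; lra.
    replace (pscal s x) with (pscal s (pscal (/ s) (pscal s x))) by (rewrite P_scK; auto; lra).
    replace (pscal t y) with (pscal (s * (t / s)) y) by (f_equal; field; lra).
    rewrite <- P_scD. rewrite (proj2 HP s); auto.
    rewrite P_scK by lra. field. lra.
Qed.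

Lemma HB Xs (V : Prod Xs -> Prop) (P0 : Prod Xs -> R) : vsub V -> sublin V P0 ->
  exists g : Prod Xs -> R,
    (forall x y, V x -> V y -> g (padd x y) = g x + g y) /\
    (forall t x, V x -> g (pscal t x) = t * g x) /\
    (forall x, V x -> g x <= P0 x).
Proof.
intros HV HP0. pose proof HV as [V0 [VA VS]].
set (T := {f : Prod Xs -> R | sublin V f /\ forall x, V x -> f x <= P0 x}).
set (Rl := fun a b : T => forall x, V x -> proj1_sig b x <= proj1_sig a x).
assert (t0 : T). { exists P0. split; auto. intros; lra. }
destruct (ZornP T t0 Rl) as [[ps [Hps Hps0]] Hmax].
- intros a x _; lra.
- intros a b c H1 H2 x Hx. specialize (H1 x Hx); specialize (H2 x Hx); lra.
- intros A HA. destruct (classic (exists a, A a)) as [[a0 Ha0]|ne].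
  2:{ exists t0. intros s Hs. exfalso; eauto. }
  set (E := fun x u => exists a, A a /\ u = proj1_sig a x).
  assert (nE : forall x, exists u, E x u) by (intros x; exists (proj1_sig a0 x); exists a0; auto).
  assert (bE : forall x, V x -> exists m, forall u, E x u -> m <= u).
  { intros x Hx. exists (- P0 (pscal (-1) x)). intros u [a [_ ->]]. destruct a as [a [Ha1 Ha2]].
    pose proof (sublin_neg _ V a HV Ha1 x Hx). pose proof (Ha2 _ (VS (-1) x Hx)). simpl. lra. }
  set (pinf := fun x => Rinf (E x)).
  assert (Hsub : sublin V pinf /\ forall x, V x -> pinf x <= P0 x).
  { split; [split|].
    - intros x y Hx Hy. unfold pinf. apply Rinf_add; auto.
      intros u1 u2 [a1 [HA1 ->]] [a2 [HA2 ->]].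
      assert (Ea : forall a, A a -> pinf (padd x y) <= proj1_sig a (padd x y)).
      { intros a Ha. apply Rinf_le; auto. exists a; split; auto. }
      pose proof (proj1 (proj1 (proj2_sig a1)) x y Hx Hy).
      pose proof (proj1 (proj1 (proj2_sig a2)) x y Hx Hy).
      destruct (HA _ _ HA1 HA2) as [Hc|Hc].
      + pose proof (Ea _ HA2). pose proof (Hc x Hx). unfold pinf in *. lra.
      + pose proof (Ea _ HA1). pose proof (Hc y Hy). unfold pinf in *. lra.
    - intros t x Ht Hx. unfold pinf. apply Rinf_scale; auto.
      + intros u [a [Ha ->]]. exists a; split; auto. symmetry; apply (proj2 (proj1 (proj2_sig a))); auto.
      + intros u [a [Ha ->]]. exists a; split; auto. rewrite (proj2 (proj1 (proj2_sig a))); auto. field; lra.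
    - intros x Hx. unfold pinf. eapply Rle_trans. apply Rinf_le; auto. exists a0; split; eauto.
      apply (proj2 (proj2_sig a0)); auto. }
  exists (exist _ pinf Hsub). intros s Hs x Hx. simpl. unfold pinf. apply Rinf_le; auto. exists s; auto.
- (* minimal element is linear *)
  simpl in Hmax.
  assert (Key : forall y x t, V y -> V x -> 0 <= t -> ps x <= ps (padd x (pscal t y)) - t * ps y).
  { intros y x t Hy Hx Ht.
    assert (Hs : sublin V (shiftP ps y) /\ forall x, V x -> shiftP ps y x <= P0 x).
    { split. apply (shift_sublin _ V); auto. intros z Hz. eapply Rle_trans. apply (shift_leP _ V); auto. apply Hps0; auto. }
    specialize (Hmax (exist _ _ Hs)). unfold Rl in Hmax. simpl in Hmax.
    eapply Rle_trans. apply Hmax; auto. intros z Hz. apply (shift_leP _ V); auto.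
    apply (shift_le _ V); auto. }
  assert (Hneg : forall y, V y -> ps (pscal (-1) y) = - ps y).
  { intros y Hy. pose proof (Key y (pscal (-1) y) 1 Hy (VS _ _ Hy) ltac:(lra)).
    rewrite P_negpos, (sublin_0 _ V ps HV Hps) in H.
    pose proof (sublin_neg _ V ps HV Hps y Hy). lra. }
  exists ps. split; [|split].
  + intros x y Hx Hy. pose proof (proj1 Hps x y Hx Hy).
    pose proof (proj1 Hps (padd x y) (pscal (-1) y) (VA _ _ Hx Hy) (VS _ _ Hy)).
    rewrite P_addK, Hneg in H0 by auto. lra.
  + intros t x Hx. destruct (Rlt_le_dec t 0) as [Ht|Ht].
    * rewrite P_negsc, (sublin_t _ V ps HV Hps); auto; [|lra]. rewrite Hneg; auto. ring.
    * apply (sublin_t _ V ps HV Hps); auto.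
  + auto.
Qed.

Definition HIV (Xs : nat -> VL) (p : forall n, Xs (S n) -> Xs n) (H : Prod Xs -> Prop) :=
  forall hk : nat -> Prod Xs,
      (forall k, H (hk k)) ->
      (exists a, inLim p a /\ forall k, ple (hk k) a) ->
      (exists b, inLim p b /\ forall k, ple b (hk k)) ->
      exists (s : nat -> Prod Xs) (g : Prod Xs),
        (forall n, is_supX p (fun y => exists k, (n <= k)%nat /\ y = hk k) (s n)) /\
        is_infX p (fun y => exists n, y = s n) g /\ H g.

Definition HV (Xs : nat -> VL) (p : forall n, Xs (S n) -> Xs n) (H : Prod Xs -> Prop)
  (q1 : Xs 0%nat -> R) :=
  forall hk : nat -> Prod Xs,
      (forall k, H (hk k)) -> (forall k, ple (hk (S k)) (hk k)) ->
      forall m, is_glb (fun r => exists k, r = q1 (hk k 0%nat)) m ->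
      (exists b, inLim p b /\ forall k, ple b (hk k)) /\
      (forall g, is_infX p (fun s => exists k, s = hk k) g -> m <= q1 (g 0%nat)).

Lemma vjoin_eq' (V : VL) (a b : V) : vle b a -> vjoin a b = a.
Proof. intros H. apply vle_antisym. apply vjoin_lub; auto. apply vle_refl. apply vjoin_l. Qed.

Lemma ple_antisym Xs (x y : Prod Xs) : ple x y -> ple y x -> x = y.
Proof. intros H1 H2. apply functional_extensionality_dep; intro n. apply vle_antisym; auto. Qed.

Lemma H_join Xs p (Hreg : regular_system Xs p) H (HH : convex_cone Xs p H) (Hiv : HIV Xs p H) u v :
  H u -> H v -> H (pjoin u v).
Proof.
intros Hu Hv.
assert (Lu : inLim p u) by (apply HH; auto). assert (Lv : inLim p v) by (apply HH; auto).
set (w := fun k : nat => if Nat.even k then u else v).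
assert (Hw : forall k, w k = u \/ w k = v) by (intros k; unfold w; destruct (Nat.even k); auto).
assert (LJ : inLim p (pjoin u v)) by (apply lim_join; auto).
destruct (Hiv w) as [s [g [Hs [Hg HgH]]]].
- intros k; destruct (Hw k) as [-> | ->]; auto.
- exists (pjoin u v); split; auto. intros k n; destruct (Hw k) as [-> | ->]; unfold pjoin; [apply vjoin_l|apply vjoin_r].
- exists (pscal (-1) (pjoin (pscal (-1) u) (pscal (-1) v))). split.
  + apply lim_scal, lim_join; auto; apply lim_scal; auto.
  + intros k n; unfold pscal, pjoin. destruct (Hw k) as [-> | ->].
    * rewrite <- (vnegneg _ (u n)) at 2. apply vle_neg. apply vjoin_l.
    * rewrite <- (vnegneg _ (v n)) at 2. apply vle_neg. apply vjoin_r.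
- assert (E : g = pjoin u v).
  { destruct Hg as [Lg [Hg1 Hg2]]. apply ple_antisym.
    + apply ple_trans with (s 0%nat). apply Hg1; eauto.
      destruct (Hs 0%nat) as [_ [_ Hs3]]. apply Hs3; auto.
      intros y [k [_ ->]] n. unfold pjoin. destruct (Hw k) as [-> | ->]; [apply vjoin_l|apply vjoin_r].
    + apply Hg2; auto. intros y [n ->] m. destruct (Hs n) as [_ [Hs2 _]].
      unfold pjoin. apply vjoin_lub.
      * apply (Hs2 u). exists (2 * n)%nat. split. lia. unfold w. rewrite Nat.even_even. auto.
      * apply (Hs2 v). exists (2 * n + 1)%nat. split. lia. unfold w. rewrite Nat.even_odd. auto. }
  rewrite <- E; auto.
Qed.

Fixpoint upto {Xs : nat -> VL} (x : Prod Xs) (hk : nat -> Prod Xs) (m N L : nat) : Xs m :=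
  match L with
  | O => x m
  | S L' => vjoin (upto x hk m N L') (hk (N + L')%nat m)
  end.

Fixpoint jn {Xs : nat -> VL} (hk : nat -> Prod Xs) (N M : nat) : Prod Xs :=
  match M with
  | O => hk N
  | S M' => pjoin (jn hk N M') (hk (N + S M')%nat)
  end.

Lemma key Xs p (Hreg : regular_system Xs p) H (HH : convex_cone Xs p H)
  (q1 : Xs 0%nat -> R) (q1_incr : forall a b : Xs 0%nat, vle a b -> q1 a <= q1 b)
  (Hv : HV Xs p H q1) (Hiv : HIV Xs p H) (x : Prod Xs) (c : R) :
  inLim p x ->
  (forall n, exists h, H h /\ vle (h n) (x n) /\ c <= q1 (h 0%nat)) ->
  exists G, H G /\ ple G x /\ c <= q1 (G 0%nat).
Proof.
intros Lx Hyp.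
set (hk := fun n => proj1_sig (constructive_indefinite_description _ (Hyp n))).
assert (Hk : forall n, H (hk n) /\ vle (hk n n) (x n) /\ c <= q1 (hk n 0%nat)).
{ intros n. unfold hk. destruct (constructive_indefinite_description _ (Hyp n)) as [h Hh]. exact Hh. }
clearbody hk.
assert (Lk : forall n, inLim p (hk n)) by (intros n; apply HH, Hk).
assert (hk_le : forall k m, (m <= k)%nat -> vle (hk k m) (x m)).
{ intros k m Hm. apply (lim_mono Xs p Hreg (hk k) x (Lk k) Lx k); auto. apply Hk. }
set (aN := fun N : nat => (fun m => upto x hk m N (m - N)%nat) : Prod Xs).
assert (p_upto : forall m N L, p m (upto x hk (S m) N L) = upto x hk m N L).
{ intros m N L. induction L; simpl.
  - symmetry; apply Lx.
  - destruct (Hreg m) as [_ [_ [_ Hj]]]. rewrite Hj, IHL, <- (Lk (N + L)%nat m). auto. }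
assert (upto_x : forall m N L, vle (x m) (upto x hk m N L)).
{ intros m N L; induction L; simpl. apply vle_refl. eapply vle_trans; [apply IHL|apply vjoin_l]. }
assert (upto_h : forall m N L L', (L' < L)%nat -> vle (hk (N + L')%nat m) (upto x hk m N L)).
{ intros m N L L' HL. induction L. lia. simpl. destruct (Nat.eq_dec L' L) as [->|Hne].
  - apply vjoin_r.
  - eapply vle_trans; [apply IHL; lia|apply vjoin_l]. }
assert (LaN : forall N, inLim p (aN N)).
{ intros N m. unfold aN. destruct (le_lt_dec N m) as [HN|HN].
  - replace (S m - N)%nat with (S (m - N)) by lia. simpl.
    destruct (Hreg m) as [_ [_ [_ Hj]]]. rewrite Hj, p_upto, <- (Lk (N + (m - N))%nat m).
    replace (N + (m - N))%nat with m by lia. symmetry. apply vjoin_eq'.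
    eapply vle_trans; [apply hk_le; lia|apply upto_x].
  - replace (S m - N)%nat with O by lia. replace (m - N)%nat with O by lia. simpl. apply Lx. }
assert (hk_aN : forall N k, (N <= k)%nat -> ple (hk k) (aN N)).
{ intros N k Hk' m. unfold aN. destruct (le_lt_dec m k) as [Hm|Hm].
  - eapply vle_trans; [apply hk_le; auto|apply upto_x].
  - pose proof (upto_h m N (m - N)%nat (k - N)%nat ltac:(lia)) as Hu.
    replace (N + (k - N))%nat with k in Hu by lia. exact Hu. }
assert (aN_N : forall N, vle (aN N N) (x N)).
{ intros N. unfold aN. rewrite Nat.sub_diag. simpl. apply vle_refl. }
assert (jnH : forall N M, H (jn hk N M)).
{ intros N M; induction M; simpl. apply Hk. apply (H_join Xs p Hreg H HH Hiv); auto. apply Hk. }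
assert (jnL : forall N M, inLim p (jn hk N M)).
{ intros N M; apply HH, jnH. }
assert (jn_ge : forall N M j, (j <= M)%nat -> ple (hk (N + j)%nat) (jn hk N M)).
{ intros N M j Hj. induction M; simpl.
  - replace (N + j)%nat with N by lia. apply ple_refl.
  - destruct (Nat.eq_dec j (S M)) as [->|Hne].
    + intros n; apply vjoin_r.
    + intros n; eapply vle_trans; [apply IHM; lia|apply vjoin_l]. }
assert (jn_lub : forall N M z, (forall j, (j <= M)%nat -> ple (hk (N + j)%nat) z) -> ple (jn hk N M) z).
{ intros N M z Hz. induction M; simpl.
  - replace N with (N + 0)%nat at 1 by lia. apply Hz; lia.
  - intros n. apply vjoin_lub. apply IHM; intros; apply Hz; lia. apply Hz; lia. }
assert (jn_mono : forall N M M', (M <= M')%nat -> ple (jn hk N M) (jn hk N M')).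
{ intros N M M' HM. apply jn_lub. intros j Hj. apply jn_ge. lia. }
assert (Hs : forall N, exists g, H g /\ inLim p g /\ (forall M, ple (jn hk N M) g) /\
   (forall z, inLim p z -> (forall M, ple (jn hk N M) z) -> ple g z)).
{ intros N. destruct (Hiv (jn hk N)) as [s [g [Hs1 [[Lg [Hg1 Hg2]] HgH]]]].
  - auto.
  - exists (aN N). split; auto. intros k. apply jn_lub. intros j _. apply hk_aN. lia.
  - exists (hk N). split; auto. intros k. replace N with (N + 0)%nat at 1 by lia. apply jn_ge. lia.
  - exists g. split; auto. split; auto. split.
    + intros M. apply Hg2; auto. intros y [n ->].
      destruct (Hs1 n) as [_ [Hs2 _]]. apply ple_trans with (jn hk N (Nat.max n M)).
      apply jn_mono; lia. apply Hs2. exists (Nat.max n M). split; auto; lia.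
    + intros z Lz Hz. apply ple_trans with (s 0%nat). apply Hg1; eauto.
      destruct (Hs1 0%nat) as [_ [_ Hs3]]. apply Hs3; auto. intros y [k [_ ->]]. auto. }
set (sN := fun N => proj1_sig (constructive_indefinite_description _ (Hs N))).
assert (HsN : forall N, H (sN N) /\ inLim p (sN N) /\ (forall M, ple (jn hk N M) (sN N)) /\
   (forall z, inLim p z -> (forall M, ple (jn hk N M) z) -> ple (sN N) z)).
{ intros N. unfold sN. destruct (constructive_indefinite_description _ (Hs N)) as [g Hg]. exact Hg. }
clearbody sN.
assert (sN_dec : forall N, ple (sN (S N)) (sN N)).
{ intros N. apply HsN. apply HsN. intros M. apply jn_lub. intros j Hj.
  replace (S N + j)%nat with (N + S j)%nat by lia.
  apply ple_trans with (jn hk N (S j)). apply jn_ge; lia. apply HsN. }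
assert (sN_dec' : forall j k, (k <= j)%nat -> ple (sN j) (sN k)).
{ intros j k Hjk. induction Hjk. apply ple_refl. eapply ple_trans; [apply sN_dec|auto]. }
assert (sN_aN : forall N, ple (sN N) (aN N)).
{ intros N. apply HsN; auto. intros M. apply jn_lub. intros j _. apply hk_aN. lia. }
assert (sN_c : forall N, c <= q1 (sN N 0%nat)).
{ intros N. eapply Rle_trans. apply Hk. apply q1_incr.
  apply (proj1 (proj2 (proj2 (HsN N))) 0%nat). }
set (Q := fun r => exists k, r = q1 (sN k 0%nat)).
assert (nQ : exists r, Q r) by (exists (q1 (sN 0%nat 0%nat)); exists 0%nat; auto).
assert (bQ : exists m, forall r, Q r -> m <= r) by (exists c; intros r [k ->]; auto).
destruct (Rinf_spec Q nQ bQ) as [HQ1 HQ2].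
assert (cm : c <= Rinf Q) by (apply HQ2; intros r [k ->]; auto).
destruct (Hv sN (fun k => proj1 (HsN k)) sN_dec (Rinf Q) (conj HQ1 HQ2)) as [[b [Lb Hb]] Hinf].
destruct (Hiv sN) as [s [G [Hs1 [[LG [HG1 HG2]] HGH]]]].
- intros k; apply HsN.
- exists (sN 0%nat). split. apply HsN. intros k. apply sN_dec'. lia.
- exists b; auto.
- assert (IG : is_infX p (fun y => exists k, y = sN k) G).
  { split; auto. split.
    - intros y [k ->]. apply ple_trans with (s k). apply HG1; eauto.
      destruct (Hs1 k) as [_ [_ Hs3]]. apply Hs3. apply HsN.
      intros y [j [Hj ->]]. apply sN_dec'; auto.
    - intros z Lz Hz. apply HG2; auto. intros y [n ->].
      destruct (Hs1 n) as [_ [Hs2 _]]. apply ple_trans with (sN n). apply Hz; eauto.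
      apply Hs2. exists n; auto. }
  exists G. split; auto. split.
  + intros n. eapply vle_trans. apply (proj1 (proj2 IG) (sN n)); eauto.
    eapply vle_trans. apply sN_aN. apply aN_N.
  + eapply Rle_trans; [exact cm|]. apply Hinf; auto.
Qed.

Lemma pos_of_scal (L a : R) : (forall t, 0 < t -> t * a <= L) -> 0 <= L.
Proof.
intros H. destruct (Rle_dec 0 L) as [|HL]; auto. exfalso.
destruct (Rle_dec 0 a) as [Ha|Ha].
- specialize (H 1 ltac:(lra)). lra.
- assert (Ht : 0 < L / (2 * a)).
  { replace (L / (2 * a)) with ((- L) / (- (2 * a))) by (field; lra).
    apply Rdiv_lt_0_compat; lra. }
  specialize (H _ Ht). replace (L / (2 * a) * a) with (L / 2) in H by (field; lra). lra.
Qed.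

Lemma ple_scal_inv Xs (h x : Prod Xs) t : 0 < t -> ple h (pscal t x) -> ple (pscal (/ t) h) x.
Proof.
intros Ht Hh n. unfold pscal in *. specialize (Hh n).
apply (vle_scal _ (/ t)) in Hh; [|apply Rlt_le, Rinv_0_lt_compat; auto].
rewrite vscalA, Rinv_l, vscal1 in Hh; auto; lra.
Qed.

Lemma ple_scal Xs (h x : Prod Xs) t : 0 <= t -> ple h x -> ple (pscal t h) (pscal t x).
Proof. intros Ht Hh n. unfold pscal. apply vle_scal; auto. Qed.

Definition Eset {Xs} (H : Prod Xs -> Prop) (q1 : Xs 0%nat -> R) (x : Prod Xs) :=
  fun r => exists h, H h /\ ple h x /\ r = q1 (h 0%nat).

Lemma Eset_bd Xs (H : Prod Xs -> Prop) q1 (q1_incr : forall a b : Xs 0%nat, vle a b -> q1 a <= q1 b) x :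
  forall r, Eset H q1 x r -> r <= q1 (x 0%nat).
Proof. intros r [h [_ [Hh ->]]]. apply q1_incr, Hh. Qed.

Lemma spf_cases Xs (H : Prod Xs -> Prop) q1 (q1_incr : forall a b : Xs 0%nat, vle a b -> q1 a <= q1 b) x :
  (~ (exists r, Eset H q1 x r) /\ spf H (fun x => q1 (x 0%nat)) x = MInf) \/
  ((exists r, Eset H q1 x r) /\ exists s, spf H (fun x => q1 (x 0%nat)) x = Fin s /\ is_lub (Eset H q1 x) s).
Proof.
destruct (classic (exists r, Eset H q1 x r)) as [ne|ne].
- right. split; auto. apply (ERsup_fin _ (q1 (x 0%nat))); auto. apply Eset_bd; auto.
- left. split; auto. apply ERsup_empty; auto.
Qed.

Definition admissible {Xs} (H X0 : Prod Xs -> Prop) (q1 : Xs 0%nat -> R) (l : Prod Xs -> R) :=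
  forall h x', H h -> X0 x' -> ple h x' -> q1 (h 0%nat) <= l x'.

Lemma produce Xs p (Hreg : regular_system Xs p)
  (q1 : Xs 0%nat -> R)
  (q1_incr : forall a b : Xs 0%nat, vle a b -> q1 a <= q1 b)
  (q1_supadd : forall a b : Xs 0%nat, q1 a + q1 b <= q1 (vadd a b))
  (q1_hom : forall (t : R) (a : Xs 0%nat), 0 < t -> q1 (vscal t a) = t * q1 a)
  (X0 H : Prod Xs -> Prop)
  (HX0 : subspace Xs p X0) (HH : convex_cone Xs p H)
  (Hii : forall n x, X0 x -> exists h, H h /\ vle (h n) (x n))
  (Hv : HV Xs p H q1) (Hiv : HIV Xs p H) x r :
  X0 x -> ~ (exists e, Eset H q1 x e /\ r <= e) ->
  exists l, linear_on Xs X0 l /\ admissible H X0 q1 l /\ l x <= r.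
Proof.
intros Hx Hr. destruct HX0 as [XL [X00 [XA XS]]].
assert (VX : vsub X0) by (split; auto).
assert (Hn : exists n, forall h, H h -> vle (h n) (x n) -> q1 (h 0%nat) < r).
{ apply NNPP. intros Hc. apply Hr.
  destruct (key Xs p Hreg H HH q1 q1_incr Hv Hiv x r (XL x Hx)) as [G [HG [HGx HGr]]].
  - intros n. apply NNPP. intros Hc2. apply Hc. exists n. intros h Hh Hhn.
    apply Rnot_le_lt. intros Hle. apply Hc2. exists h; auto.
  - exists (q1 (G 0%nat)). split; auto. exists G; auto. }
destruct Hn as [n Hn].
set (Pset := fun z u => exists h, H h /\ vle (h n) (z n) /\ u = - q1 (h 0%nat)).
set (P := fun z => Rinf (Pset z)).
assert (Pne : forall z, X0 z -> exists u, Pset z u).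
{ intros z Hz. destruct (Hii n z Hz) as [h [Hh Hhz]]. exists (- q1 (h 0%nat)). exists h; auto. }
assert (Pbd : forall z, X0 z -> exists m, forall u, Pset z u -> m <= u).
{ intros z Hz. exists (- q1 (z 0%nat)). intros u [h [Hh [Hhz ->]]].
  assert (vle (h 0%nat) (z 0%nat)).
  { apply (lim_mono Xs p Hreg h z (proj1 HH h Hh) (XL z Hz) n Hhz). lia. }
  apply q1_incr in H0. lra. }
assert (Psub : sublin X0 P).
{ split.
  - intros z w Hz Hw. unfold P. apply Rinf_add; auto.
    intros a b [h [Hh [Hhz ->]]] [k [Hk [Hkw ->]]].
    eapply Rle_trans. apply Rinf_le.
    + exists (padd h k). split. apply (proj1 (proj2 HH)); auto. split; [|reflexivity].
      unfold padd. eapply vle_trans. apply vle_add; eauto.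
      rewrite (vaddC _ (z n)), (vaddC _ (z n)). apply vle_add; auto.
    + apply Pbd; auto.
    + unfold padd. pose proof (q1_supadd (h 0%nat) (k 0%nat)). lra.
  - intros t z Ht Hz. unfold P. apply Rinf_scale; auto.
    + intros a [h [Hh [Hhz ->]]]. exists (pscal t h). split. apply (proj2 (proj2 HH)); auto.
      split. unfold pscal. apply vle_scal; auto; lra. unfold pscal. rewrite q1_hom; auto. ring.
    + intros b [h [Hh [Hhz ->]]]. exists (pscal (/ t) h). split. apply (proj2 (proj2 HH)); auto.
      apply Rinv_0_lt_compat; auto.
      split. unfold pscal in *. apply (vle_scal _ (/ t)) in Hhz; [|apply Rlt_le, Rinv_0_lt_compat; auto].
      rewrite vscalA, Rinv_l, vscal1 in Hhz; auto; lra.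
      unfold pscal. rewrite q1_hom; [|apply Rinv_0_lt_compat; auto]. field. lra. }
assert (Px : - r <= P x).
{ unfold P. apply Rinf_ge; auto. intros u [h [Hh [Hhx ->]]]. specialize (Hn h Hh Hhx). lra. }
destruct (HB Xs X0 (shiftP P x) VX (shift_sublin _ X0 P VX Psub x Hx)) as [g [gA [gS gle]]].
exists (fun z => - g z). split; [split|split].
- intros z w Hz Hw. rewrite gA; auto. ring.
- intros t z Hz. rewrite gS; auto. ring.
- intros h x' Hh Hx' Hhx'. pose proof (gle x' Hx'). pose proof (shift_leP _ X0 P VX Psub x x' Hx Hx').
  assert (P x' <= - q1 (h 0%nat)). { unfold P. apply Rinf_le. exists h; auto. apply Pbd; auto. }
  lra.
- pose proof (gS (-1) x Hx). pose proof (gle _ (XS (-1) x Hx)).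
  pose proof (shift_le _ X0 P VX Psub x (pscal (-1) x) 1 Hx (XS _ _ Hx) ltac:(lra)).
  rewrite P_negpos, (sublin_0 _ X0 P VX Psub) in H2. lra.
Qed.

Lemma admissible_pos Xs (H X0 : Prod Xs -> Prop) q1
  (q1_hom : forall (t : R) (a : Xs 0%nat), 0 < t -> q1 (vscal t a) = t * q1 a)
  (HH : forall t h, 0 < t -> H h -> H (pscal t h)) l :
  (exists h, H h /\ ple h pzero) -> admissible H X0 q1 l -> positive_on Xs X0 l.
Proof.
intros [h0 [Hh0 Hh0le]] Hl x Hx Hpos. apply (pos_of_scal _ (q1 (h0 0%nat))).
intros t Ht. rewrite <- q1_hom; auto. apply (Hl (pscal t h0) x); auto.
intros n. unfold pscal. eapply vle_trans. apply vle_scal. lra. apply Hh0le.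
unfold pzero. rewrite vscal_z. apply Hpos.
Qed.

Theorem mainTheorem9
  (Xs : nat -> VL) (p : forall n, Xs (S n) -> Xs n)
  (Hreg : regular_system Xs p) (Hred : reduced Xs p)
  (q1 : Xs 0%nat -> R)
  (q1_incr : forall a b : Xs 0%nat, vle a b -> q1 a <= q1 b)
  (q1_supadd : forall a b : Xs 0%nat, q1 a + q1 b <= q1 (vadd a b))
  (q1_hom : forall (t : R) (a : Xs 0%nat), 0 < t -> q1 (vscal t a) = t * q1 a)
  (X0 H : Prod Xs -> Prop)
  (HX0 : subspace Xs p X0) (HH : convex_cone Xs p H)
  (* (i) *)
  (Hi : forall n, exists h, H h /\ vle (h n) vzero)
  (* (ii) *)
  (Hii : forall n x, X0 x -> exists h, H h /\ vle (h n) (x n))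
  (* (v) *)
  (Hv : forall hk : nat -> Prod Xs,
      (forall k, H (hk k)) -> (forall k, ple (hk (S k)) (hk k)) ->
      forall m, is_glb (fun r => exists k, r = q1 (hk k 0%nat)) m ->
      (exists b, inLim p b /\ forall k, ple b (hk k)) /\
      (forall g, is_infX p (fun s => exists k, s = hk k) g -> m <= q1 (g 0%nat)))
  (* (iii-iv) *)
  (Hiii_iv : forall hk : nat -> Prod Xs,
      (forall k, H (hk k)) ->
      (exists a, inLim p a /\ forall k, ple (hk k) a) ->
      (exists b, inLim p b /\ forall k, ple b (hk k)) ->
      exists (s : nat -> Prod Xs) (g : Prod Xs),
        (forall n, is_supX p (fun y => exists k, (n <= k)%nat /\ y = hk k) (s n)) /\
        is_infX p (fun y => exists n, y = s n) g /\ H g) :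
  let q := fun x : Prod Xs => q1 (x 0%nat) in
  (* values in R ∪ {-oo} *)
  (forall x, inLim p x -> spf H q x <> PInf) /\
  (* superadditive *)
  (forall x y, inLim p x -> inLim p y ->
      ERle (ERplus (spf H q x) (spf H q y)) (spf H q (padd x y))) /\
  (* positively homogeneous *)
  (forall t x, 0 < t -> inLim p x -> spf H q (pscal t x) = ERscal t (spf H q x)) /\
  (* duality formula with all linear functionals on X0 *)
  (forall x, X0 x ->
      spf H q x =
      ERinf (fun r => exists l : Prod Xs -> R,
               linear_on Xs X0 l /\
               (forall h x', H h -> X0 x' -> ple h x' -> q h <= l x') /\
               r = l x)) /\
  (* if H contains a vector h <= 0 *)
  ((exists h, H h /\ ple h pzero) ->
      (exists r, spf H q pzero = Fin r) /\
      (forall x, inLim p x -> ple pzero x -> ERle (Fin 0) (spf H q x)) /\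
      (forall x, X0 x ->
         spf H q x =
         ERinf (fun r => exists l : Prod Xs -> R,
                  linear_on Xs X0 l /\ positive_on Xs X0 l /\
                  (forall h x', H h -> X0 x' -> ple h x' -> q h <= l x') /\
                  r = l x))).
Proof.
intros q. subst q.
pose proof HX0 as [XL [X00 [XA XS]]].
pose proof HH as [HL [HA HS]].
assert (q10 : q1 vzero = 0).
{ pose proof (q1_hom 2 vzero ltac:(lra)) as Hq. rewrite vscal_z in Hq. lra. }
assert (Hprod := produce Xs p Hreg q1 q1_incr q1_supadd q1_hom X0 H HX0 HH Hii Hv Hiii_iv).
assert (Cfin : forall x, inLim p x -> spf H (fun x => q1 (x 0%nat)) x <> PInf).
{ intros x Hx. destruct (spf_cases Xs H q1 q1_incr x) as [[_ ->]|[_ [s [-> _]]]]; discriminate. }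
assert (Eadd : forall x y r1 r2, Eset H q1 x r1 -> Eset H q1 y r2 ->
   exists e, Eset H q1 (padd x y) e /\ r1 + r2 <= e).
{ intros x y r1 r2 [h [Hh [Hhx ->]]] [k [Hk [Hky ->]]]. exists (q1 (padd h k 0%nat)).
  split. exists (padd h k). split; auto. split; auto.
  intros n. unfold padd. eapply vle_trans. apply vle_add; eauto.
  rewrite (vaddC _ (x n)), (vaddC _ (x n)). apply vle_add; auto.
  apply q1_supadd. }
assert (Dual : forall x (S : R -> Prop), X0 x ->
   (forall s, S s -> exists l, admissible H X0 q1 l /\ s = l x) ->
   (forall r, ~ (exists e, Eset H q1 x e /\ r <= e) -> exists s, S s /\ s <= r) ->
   spf H (fun x => q1 (x 0%nat)) x = ERinf S).
{ intros x S Hx HS1 HS2. unfold spf, ERinf.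
  apply (dual_generic _ _ (q1 (x 0%nat))).
  - apply (Eset_bd Xs H q1 q1_incr x).
  - intros s e Hs He. destruct (HS1 s Hs) as [l [Hl ->]].
    destruct He as [h [Hh [Hhx ->]]]. apply Hl; auto.
  - exact HS2. }
split; [exact Cfin|]. split; [|split; [|split]].
-
  intros x y Hx Hy.
  destruct (spf_cases Xs H q1 q1_incr x) as [[_ ->]|[ne1 [s1 [-> [Hs1 Hs1']]]]]; [simpl; auto|].
  destruct (spf_cases Xs H q1 q1_incr y) as [[_ ->]|[ne2 [s2 [-> [Hs2 Hs2']]]]]; [destruct (spf H _ (padd x y)); simpl; auto|].
  destruct ne1 as [r1 Hr1], ne2 as [r2 Hr2].
  destruct (spf_cases Xs H q1 q1_incr (padd x y)) as [[ne _]|[_ [s3 [-> [Hs3 Hs3']]]]].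
  + exfalso. destruct (Eadd x y r1 r2 Hr1 Hr2) as [e [He _]]. eauto.
  + simpl.
    assert (forall a, Eset H q1 x a -> a <= s3 - s2).
    { intros a Ha. assert (s2 <= s3 - a); [|lra]. apply Hs2'. intros b Hb.
      destruct (Eadd x y a b Ha Hb) as [e [He Hle]]. apply Hs3 in He. lra. }
    assert (s1 <= s3 - s2) by (apply Hs1'; auto). lra.
-
  intros t x Ht Hx.
  destruct (spf_cases Xs H q1 q1_incr x) as [[ne ->]|[[r0 Hr0] [s [-> [Hs Hs']]]]].
  + simpl. apply ERsup_empty. intros [r [h [Hh [Hhx ->]]]]. apply ne.
    exists (q1 (pscal (/ t) h 0%nat)). exists (pscal (/ t) h). split.
    apply HS; auto. apply Rinv_0_lt_compat; auto. split; auto. apply ple_scal_inv; auto.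
  + destruct (spf_cases Xs H q1 q1_incr (pscal t x)) as [[ne _]|[_ [s' [-> [Hs2 Hs2']]]]].
    * exfalso. apply ne. destruct Hr0 as [h [Hh [Hhx ->]]].
      exists (q1 (pscal t h 0%nat)), (pscal t h). split; auto. split; auto. apply ple_scal; auto. lra.
    * simpl. f_equal. apply Rle_antisym.
      -- apply Hs2'. intros r [h [Hh [Hhx ->]]].
         assert (q1 (pscal (/ t) h 0%nat) <= s).
         { apply Hs. exists (pscal (/ t) h). split. apply HS; auto. apply Rinv_0_lt_compat; auto.
           split; auto. apply ple_scal_inv; auto. }
         unfold pscal in H0. rewrite q1_hom in H0 by (apply Rinv_0_lt_compat; auto).
         apply Rmult_le_compat_l with (r := t) in H0; [|lra].
         replace (t * (/ t * q1 (h 0%nat))) with (q1 (h 0%nat)) in H0 by (field; lra). exact H0.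
      -- assert (s <= s' / t); [|apply Rmult_le_compat_l with (r := t) in H0; [|lra];
                                 replace (t * (s' / t)) with s' in H0 by (field; lra); exact H0].
         apply Hs'. intros r [h [Hh [Hhx ->]]].
         assert (q1 (pscal t h 0%nat) <= s').
         { apply Hs2. exists (pscal t h). split; auto. split; auto. apply ple_scal; auto; lra. }
         unfold pscal in H0. rewrite q1_hom in H0 by auto.
         apply Rmult_le_compat_l with (r := / t) in H0; [|apply Rlt_le, Rinv_0_lt_compat; auto].
         replace (/ t * (t * q1 (h 0%nat))) with (q1 (h 0%nat)) in H0 by (field; lra).
         unfold Rdiv. rewrite Rmult_comm. exact H0.
-
  intros x Hx. apply Dual; auto.
  + intros s [l [_ [Hl ->]]]. exists l; auto.
  + intros r Hr. destruct (Hprod x r Hx Hr) as [l [Hl1 [Hl2 Hl3]]].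
    exists (l x). split; auto. exists l; auto.
-
  intros [h0 [Hh0 Hh0le]]. split; [|split].
  + destruct (ERsup_fin (Eset H q1 pzero) (q1 (@pzero Xs 0%nat))) as [s [Es _]].
    * exists (q1 (h0 0%nat)); exists h0; auto.
    * apply (Eset_bd Xs H q1 q1_incr).
    * exists s. exact Es.
  + intros x Hx Hpos.
    destruct (spf_cases Xs H q1 q1_incr x) as [[ne _]|[_ [s [-> [Hs Hs']]]]].
    * exfalso. apply ne. exists (q1 (h0 0%nat)), h0. split; auto. split; auto. eapply ple_trans; eauto.
    * simpl. apply (pos_of_scal _ (q1 (h0 0%nat))). intros t Ht. rewrite <- q1_hom; auto.
      apply Hs. exists (pscal t h0). split; auto. split; auto.
      intros n. unfold pscal. eapply vle_trans. apply vle_scal. lra. apply Hh0le.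
      unfold pzero. rewrite vscal_z. apply Hpos.
  + intros x Hx. apply Dual; auto.
    * intros s [l [_ [_ [Hl ->]]]]. exists l; auto.
    * intros r Hr. destruct (Hprod x r Hx Hr) as [l [Hl1 [Hl2 Hl3]]].
      exists (l x). split; auto. exists l. split; auto. split; auto.
      apply (admissible_pos Xs H X0 q1 q1_hom HS l); eauto.
Qed.
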